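(* Let $n$ be even, let $x_1,\dots,x_n\in\mathbb{R}^d$, let $\pi_k$ be a permutation of $[n]$ (vector $x_i$ is associated with datapoint $\pi_k(i)$), and let $S\subseteq[n]$ with $|S|=n/2$. Form $\pi_{k+1}$ by thinned reordering: starting from empty lists $\mathrm{front}$ and $\mathrm{back}$, for $i=1,\dots,n$ append $\pi_k(i)$ to $\mathrm{front}$ if $i\in S$ and otherwise prepend $\pi_k(i)$ to $\mathrm{back}$; set $\pi_{k+1}=\mathrm{concatenate}(\mathrm{front},\mathrm{back})$. Let $y_1,\dots,y_n$ be the vectors listed in the new order, i.e. $y_j=x_i$ where $\pi_k(i)=\pi_{k+1}(j)$. With $\eta_i:=2\cdot\mathbf{1}\{i\in S\}-1$, $$\max_{j\in[n]}\Big\|\sum_{l=1}^jy_l\Big\|_2\le\frac12\max_{j\in[n]}\Big\|\sum_{i=1}^jx_i\Big\|_2+\frac12\max_{j\in[n]}\Big\|\sum_{i=1}^j\eta_ix_i\Big\|_2+\Big\|\sum_{i=1}^nx_i\Big\|_2.$$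
   Context: In the paper, $x_i=x_i^k$ are the stochastic gradients of epoch $k$ and $S$ is the set of indices kept by a thinning algorithm returning $n/2$ of the $n$ vectors. *)

(* Defs.v *)
From HB Require Import structures.
From mathcomp Require Import all_boot all_order all_fingroup all_algebra.
From mathcomp Require Import reals.
Set Implicit Arguments. Unset Strict Implicit. Unset Printing Implicit Defensive.
Import Order.TTheory GRing.Theory Num.Theory.
Local Open Scope ring_scope.

Definition norm2 (R : realType) (d : nat) (v : 'rV[R]_d) : R :=
  Num.sqrt (\sum_(i < d) (v ord0 i) ^+ 2).

(* max_{j in [n]} of a nonnegative quantity (0 for n = 0) *)
Definition maxj (R : realType) (n : nat) (f : 'I_n -> R) : R :=
  \big[Num.max/0]_(j < n) f j.

(* prefix sum  sum_{i=1}^{j} x_i  (0-based: indices i <= j) *)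
Definition psum (R : realType) (d n : nat) (x : 'I_n -> 'rV[R]_d) (j : 'I_n)
  : 'rV[R]_d := \sum_(i < n | (i <= j)%N) x i.

Definition reorder_step (n : nat) (pi : 'S_n) (S : {set 'I_n})
  (st : seq 'I_n * seq 'I_n) (i : 'I_n) : seq 'I_n * seq 'I_n :=
  if i \in S then (rcons st.1 (pi i), st.2) else (st.1, pi i :: st.2).

Definition thinned_reorder (n : nat) (pi : 'S_n) (S : {set 'I_n}) : seq 'I_n :=
  let st := foldl (reorder_step pi S) ([::], [::]) (enum 'I_n) in st.1 ++ st.2.

Definition reordered (R : realType) (d n : nat) (x : 'I_n -> 'rV[R]_d)
  (pi : 'S_n) (S : {set 'I_n}) (j : 'I_n) : 'rV[R]_d :=
  x ((pi^-1)%g (nth j (thinned_reorder pi S) j)).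

Definition eta_sign (R : realType) (n : nat) (S : {set 'I_n}) (i : 'I_n) : R :=
  2 * (i \in S)%:R - 1.

(* Main.v *)
Require Import Defs.
From HB Require Import structures.
From mathcomp Require Import all_boot all_order all_fingroup all_algebra.
From mathcomp Require Import reals.
From mathcomp Require Import ring lra zify.
Import Order.TTheory GRing.Theory Num.Theory.
Set Implicit Arguments. Unset Strict Implicit.
Local Open Scope ring_scope.

Section N.
Variable R : realType.

Lemma prod_sums d (f g : 'I_d -> R) :
  (\sum_i f i) * (\sum_j g j) = \sum_i \sum_j f i * g j.
Proof. rewrite big_distrl; apply: eq_bigr => i _; by rewrite big_distrr. Qed.

Lemma lagrange d (u v : 'I_d -> R) :
  \sum_i \sum_j (u i * v j - u j * v i) ^+ 2 =
  2 * ((\sum_i u i ^+ 2) * (\sum_j v j ^+ 2) - (\sum_i u i * v i) ^+ 2).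
Proof.
have E : forall i j, (u i * v j - u j * v i) ^+ 2 =
   u i ^+ 2 * v j ^+ 2 + v i ^+ 2 * u j ^+ 2 - 2 * ((u i * v i) * (u j * v j)).
  by move=> i j; ring.
under eq_bigr do under eq_bigr do rewrite E.
under eq_bigr do rewrite sumrB big_split /=.
rewrite sumrB big_split /= -!prod_sums.
have F : forall i, \sum_j 2 * (u i * v i * (u j * v j)) = 2 * \sum_j (u i * v i * (u j * v j)).
  by move=> i; rewrite big_distrr.
under eq_bigr do rewrite F.
rewrite -big_distrr /= -prod_sums; ring.
Qed.

Lemma cs d (u v : 'I_d -> R) :
  (\sum_i u i * v i) ^+ 2 <= (\sum_i u i ^+ 2) * (\sum_j v j ^+ 2).
Proof.
have : 0 <= \sum_i \sum_j (u i * v j - u j * v i) ^+ 2.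
  by apply: sumr_ge0 => i _; apply: sumr_ge0 => j _; apply: sqr_ge0.
rewrite lagrange; lra.
Qed.

Lemma sqrt_sum_ge0 d (u : 'I_d -> R) : 0 <= \sum_i u i ^+ 2.
Proof. by apply: sumr_ge0 => i _; apply: sqr_ge0. Qed.

Lemma minkowski d (u v : 'I_d -> R) :
  Num.sqrt (\sum_i (u i + v i) ^+ 2) <=
  Num.sqrt (\sum_i u i ^+ 2) + Num.sqrt (\sum_i v i ^+ 2).
Proof.
set A := \sum_i u i ^+ 2; set B := \sum_i v i ^+ 2.
have hA : 0 <= A by apply: sqrt_sum_ge0.
have hB : 0 <= B by apply: sqrt_sum_ge0.
have e : \sum_i (u i + v i) ^+ 2 = A + B + 2 * \sum_i u i * v i.
  rewrite /A /B -big_split /= big_distrr -big_split /=.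
  by apply: eq_bigr => i _; ring.
set C := \sum_i u i * v i in e.
have hC : C <= Num.sqrt A * Num.sqrt B.
  apply: le_trans (ler_norm C) _.
  rewrite -sqrtrM // -sqrtr_sqr ler_sqrt; last by rewrite mulr_ge0.
  exact: cs.
have sA := sqrtr_ge0 A; have sB := sqrtr_ge0 B.
rewrite -[X in _ <= X]ger0_norm ?addr_ge0 // -sqrtr_sqr ler_sqrt ?sqr_ge0 //.
rewrite e sqrrD !sqr_sqrtr //; lra.
Qed.


Lemma norm2_ge0 d (v : 'rV[R]_d) : 0 <= norm2 v.
Proof. exact: sqrtr_ge0. Qed.

Lemma norm2D d (u v : 'rV[R]_d) : norm2 (u + v) <= norm2 u + norm2 v.
Proof.
rewrite /norm2; under eq_bigr do rewrite mxE.
have := @minkowski d (fun i => u ord0 i) (fun i => v ord0 i); by [].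
Qed.

Lemma norm2Z d c (v : 'rV[R]_d) : norm2 (c *: v) = `|c| * norm2 v.
Proof.
rewrite /norm2; under eq_bigr do rewrite mxE exprMn.
by rewrite -big_distrr /= sqrtrM ?sqr_ge0 // sqrtr_sqr.
Qed.

Lemma norm2N d (v : 'rV[R]_d) : norm2 (- v) = norm2 v.
Proof. by rewrite -scaleN1r norm2Z normrN normr1 mul1r. Qed.

Lemma maxj_ge0 n (f : 'I_n -> R) : (forall j, 0 <= f j) -> 0 <= maxj f.
Proof.
move=> h; rewrite /maxj; elim/big_ind: _ => //= a b ha hb; by rewrite le_max ha.
Qed.

Lemma le_maxj n (f : 'I_n -> R) j : f j <= maxj f.
Proof. exact: le_bigmax. Qed.

End N.
Section C.
Variables (n : nat) (pi : 'S_n) (S : {set 'I_n}).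

Lemma foldl_reorder (s : seq 'I_n) f b :
  foldl (reorder_step pi S) (f, b) s =
  (f ++ map pi (filter (mem S) s), rev (map pi (filter (predC (mem S)) s)) ++ b).
Proof.
elim: s f b => [|i s IH] f b /=; first by rewrite cats0.
rewrite /reorder_step /=; case: ifP => hi /=.
  by rewrite IH cat_rcons.
by rewrite IH /= rev_cons cat_rcons.
Qed.

Definition Lp := filter (mem S) (enum 'I_n) ++ rev (filter (predC (mem S)) (enum 'I_n)).

Lemma thinned_Lp : thinned_reorder pi S = map pi Lp.
Proof. by rewrite /thinned_reorder foldl_reorder /= cats0 /Lp map_cat map_rev. Qed.

Lemma perm_Lp : perm_eq Lp (enum 'I_n).
Proof.
rewrite /Lp perm_sym -(perm_filterC (mem S)) perm_cat2l perm_sym.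
by rewrite perm_rev.
Qed.

Lemma size_Lp : size Lp = n.
Proof. by rewrite (perm_size perm_Lp) size_enum_ord. Qed.

Lemma uniq_Lp : uniq Lp.
Proof. by rewrite (perm_uniq perm_Lp) enum_uniq. Qed.

Lemma mem_Lp i : i \in Lp.
Proof. by rewrite (perm_mem perm_Lp) mem_enum. Qed.

Definition key (i : 'I_n) : nat := if i \in S then (i : nat) else (2 * n - i)%N.

Definition rk : rel 'I_n := fun i j => (key i < key j)%N.

Lemma rk_trans : transitive rk.
Proof. move=> a b c; rewrite /rk; lia. Qed.

Lemma sorted_enum_val : sorted (fun i j : 'I_n => (i < j)%N) (enum 'I_n).
Proof.
have := iota_ltn_sorted 0 n; rewrite -val_enum_ord.
by rewrite sorted_map.
Qed.

Lemma sorted_Lp : sorted rk Lp.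
Proof.
rewrite sorted_pairwise; last exact: rk_trans.
rewrite /Lp pairwise_cat; apply/and3P; split.
- apply/allrelP => i j; rewrite mem_rev !mem_filter /= => /andP[hi _] /andP[hj _].
  rewrite /rk /key hi (negbTE hj); have := ltn_ord i; have := ltn_ord j; lia.
- rewrite -sorted_pairwise; last exact: rk_trans.
  apply: (@sub_in_sorted _ (mem S) (fun i j : 'I_n => (i < j)%N)).
  + by move=> i j hi hj; rewrite /rk /key hi hj.
  + by apply/allP => i; rewrite mem_filter => /andP[].
  + apply: sorted_filter; last exact: sorted_enum_val; move=> a b c; lia.
- rewrite -sorted_pairwise; last exact: rk_trans.
  rewrite rev_sorted.
  apply: (@sub_in_sorted _ (predC (mem S)) (fun i j : 'I_n => (i < j)%N)).
  + move=> i j; rewrite !inE /= => hi hj; rewrite /rk /key /= (negbTE hi) (negbTE hj).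
    have := ltn_ord i; have := ltn_ord j; lia.
  + by apply/allP => i; rewrite mem_filter => /andP[].
  + apply: sorted_filter; last exact: sorted_enum_val; move=> a b c; lia.
Qed.

Lemma index_key i j : (index i Lp <= index j Lp)%N = (key i <= key j)%N.
Proof.
have [->|ne] := eqVneq i j; first by rewrite !leqnn.
case: (ltngtP (index i Lp) (index j Lp)) => h.
- by have := sorted_ltn_index rk_trans sorted_Lp i j (mem_Lp i) (mem_Lp j) h; rewrite /rk => /ltnW ->.
- by have := sorted_ltn_index rk_trans sorted_Lp j i (mem_Lp j) (mem_Lp i) h; rewrite /rk => kji; by rewrite leqNgt kji.
- by have := nth_index i (mem_Lp i); rewrite h nth_index ?mem_Lp // => /esym e; rewrite e eqxx in ne.
Qed.

End C.

Section M.
Variables (R : realType) (d n : nat) (x : 'I_n -> 'rV[R]_d) (pi : 'S_n) (S : {set 'I_n}).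
Local Open Scope ring_scope.

Lemma idx_lt (i : 'I_n) : (index i (Lp S) < n)%N.
Proof. by rewrite -[X in (_ < X)%N](size_Lp S) index_mem mem_Lp. Qed.

Lemma psum_reord j :
  psum (reordered x pi S) j = \sum_(i | (index i (Lp S) <= j)%N) x i.
Proof.
rewrite /psum.
have E : forall l : 'I_n, reordered x pi S l = x (nth l (Lp S) l).
  by move=> l; rewrite /reordered thinned_Lp (nth_map l) ?size_Lp // permK.
under eq_bigr do rewrite E.
pose h := fun l : 'I_n => nth l (Lp S) l.
have hb : bijective h.
  exists (fun i => Ordinal (idx_lt i)) => l.
    apply: val_inj => /=; rewrite /h index_uniq ?size_Lp //; exact: uniq_Lp.
  rewrite /h /= (set_nth_default l); first by rewrite nth_index ?mem_Lp.
  by rewrite size_Lp idx_lt.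
symmetry; rewrite (@reindex _ _ _ _ _ h) /=; last exact: onW_bij.
apply: eq_bigl => l; rewrite /h index_uniq ?size_Lp //; exact: uniq_Lp.
Qed.

Let y := fun i => eta_sign R S i *: x i.

Lemma sumS (a : 'I_n) :
  \sum_(i | (i \in S) && (i <= a)%N) x i = 2^-1 *: psum x a + 2^-1 *: psum y a.
Proof.
rewrite /psum !scaler_sumr -big_split /= big_mkcondl /=.
apply: eq_bigr => i _; rewrite /y /eta_sign; case: (i \in S) => /=.
  by rewrite scalerA -scalerDl [X in X *: _](_ : _ = 1) ?scale1r //; rewrite mulr1; field.
by rewrite scalerA -scalerDl [X in X *: _](_ : _ = 0) ?scale0r //; rewrite mulr0 add0r; field.
Qed.

Lemma sumNS (a : 'I_n) :
  \sum_(i | (i \notin S) && (i <= a)%N) x i = 2^-1 *: psum x a - 2^-1 *: psum y a.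
Proof.
rewrite /psum !scaler_sumr -sumrB /= big_mkcondl /=.
apply: eq_bigr => i _; rewrite /y /eta_sign; case: (i \in S) => /=.
  by rewrite scalerA -scalerBl [X in X *: _](_ : _ = 0) ?scale0r //; rewrite mulr1; field.
by rewrite scalerA -scalerBl [X in X *: _](_ : _ = 1) ?scale1r //; rewrite mulr0 add0r; field.
Qed.

Lemma half_bound (u v : 'rV[R]_d) (b : bool) :
  norm2 (2^-1 *: u + (if b then 1 else -1) *: (2^-1 *: v)) <= 2^-1 * norm2 u + 2^-1 * norm2 v.
Proof.
apply: le_trans; first exact: norm2D.
rewrite !norm2Z.
have -> : `|(if b then 1 else -1) : R| = 1 by case: b; rewrite ?normrN normr1.
by rewrite mul1r ger0_norm // invr_ge0.
Qed.

End M.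

Theorem lemmaG1 (R : realType) (d n : nat) (x : 'I_n -> 'rV[R]_d)
  (pi : 'S_n) (S : {set 'I_n}) :
  ~~ odd n -> #|S| = n./2 ->
  maxj (fun j => norm2 (psum (reordered x pi S) j))
  <= 2^-1 * maxj (fun j => norm2 (psum x j))
   + 2^-1 * maxj (fun j => norm2 (psum (fun i => eta_sign R S i *: x i) j))
   + norm2 (\sum_(i < n) x i).
Proof.
move=> _ _.
set y := (fun i => eta_sign R S i *: x i).
set N1 := maxj (fun j => norm2 (psum x j)).
set N2 := maxj (fun j => norm2 (psum y j)).
set T := norm2 (\sum_(i < n) x i).
have hN1 : 0 <= N1 by apply: maxj_ge0 => j; exact: norm2_ge0.
have hN2 : 0 <= N2 by apply: maxj_ge0 => j; exact: norm2_ge0.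
have hT : 0 <= T by exact: norm2_ge0.
have hb1 : forall a, norm2 (psum x a) <= N1 := fun a => le_maxj _ a.
have hb2 : forall a, norm2 (psum y a) <= N2 := fun a => le_maxj _ a.
rewrite {1}/maxj; apply: bigmax_le => [|j _]; first by lra.
rewrite psum_reord.
set a := nth j (Lp S) j.
have ha : index a (Lp S) = j by rewrite index_uniq ?size_Lp ?uniq_Lp.
under eq_bigl => i do rewrite -ha index_key.
case aS: (a \in S).
- have e : forall i, (key S i <= key S a)%N = (i \in S) && (i <= a)%N.
    move=> i; rewrite /key aS; case: (i \in S) => //=.
    have := ltn_ord i; have := ltn_ord a; lia.
  under eq_bigl do rewrite e.
  rewrite sumS.
  have hh := half_bound (psum x a) (psum y a) true; rewrite /= scale1r in hh.
  apply: le_trans hh _; have := hb1 a; have := hb2 a; lra.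
- have e : forall i, (key S i <= key S a)%N = ~~ ((i \notin S) && (i < a)%N).
    move=> i; rewrite /key aS; case: (i \in S) => /=;
    have := ltn_ord i; have := ltn_ord a; lia.
  under eq_bigl do rewrite e.
  have sp : forall P : pred 'I_n, \sum_(i | ~~ P i) x i = \sum_i x i - \sum_(i | P i) x i.
    by move=> P; rewrite [in RHS](bigID P) /= addrC addrK.
  rewrite sp.
  case: (posnP a) => a0.
    rewrite [X in _ - X]big_pred0; last by move=> i /=; rewrite a0 ltn0 andbF.
    rewrite subr0 -/T; lra.
  have tn : (a.-1 < n)%N by have := ltn_ord a; lia.
  pose t := Ordinal tn.
  have e2 : \sum_(i | (i \notin S) && (i < a)%N) x i = \sum_(i | (i \notin S) && (i <= t)%N) x i.
    by apply: eq_bigl => i; congr (_ && _); rewrite /=; lia.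
  rewrite e2 sumNS.
  apply: le_trans; first exact: norm2D.
  rewrite norm2N.
  have hh := half_bound (psum x t) (psum y t) false; rewrite /= scaleN1r in hh.
  rewrite -/T; have := hb1 t; have := hb2 t; lra.
Qed.
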